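(* Let $k$ be a positive integer, $a=6k+5$, $b=2a-6$, $c=2a-4$, $S=\{a,b,c\}$, $G=\langle S\rangle$. For $i\in[0,4k+2]$ let $I_{i,k}=[ia-6\lfloor i/2\rfloor,\,ia-4]_2\cup\{ia\}$, and let $H_{14,k}=\bigcup_{i=0}^{4k+2}I_{i,k}\cup[(4k+1)a+3,\infty[$. Then: (1) $x\in G$ if and only if $x=(s+2q)a-6q+2r$ for some $q,r,s\in\mathbb{N}$ with $0\le r\le q$; (2) $I_{i,k}<I_{i+2,k}$ for $i\in[0,4k]$; $I_{i,k}<I_{i+1,k}$ for $i\in[0,2k]$; and for every $i\in[2k+1,4k+1]$, $I_{i+1,k}\cap[(i-1)a+1,\,ia]=[ia-6i_k-1,\,ia-1]_2$, where $i_k=\lfloor (i-1-2k)/2\rfloor$; (3) $G=H_{14,k}$; (4) $H_{14,k}$ is a $3$-permutation numerical semigroup.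
   Context: $\mathbb{N}=\{0,1,2,\dots\}$. A numerical semigroup is a submonoid $G$ of $(\mathbb{N},+,0)$ with $\mathbb{N}\setminus G$ finite; $\langle S\rangle$ is the submonoid generated by $S$. Writing the elements of a numerical semigroup as $0=g_0<g_1<g_2<\cdots$, it is an $n$-permutation numerical semigroup if it is generated by $\{g_1,\dots,g_n\}$ and for every $k\in\mathbb{N}$ the tuple $(g_{kn+1}\bmod n,\dots,g_{kn+n}\bmod n)$ contains exactly one representative of each residue class mod $n$. Notation: $[u,v]=\{x\in\mathbb{N}:u\le x\le v\}$ and $[u,v]_2=\{x\in[u,v]:x\equiv u\pmod 2\}$ (both empty if $u>v$); $[u,\infty[=\{x\in\mathbb{N}:x\ge u\}$; for nonempty $X,Y$, $X<Y$ means $x<y$ for all $x\in X,y\in Y$. *)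

(* Defs.v *)
From mathcomp Require Import all_boot.
Set Implicit Arguments. Unset Strict Implicit. Unset Printing Implicit Defensive.

Inductive gen (S : nat -> Prop) : nat -> Prop :=
| gen0 : gen S 0
| genS x y : S x -> gen S y -> gen S (x + y).

Definition numerical_semigroup (G : nat -> Prop) : Prop :=
  G 0 /\ (forall x y, G x -> G y -> G (x + y)) /\
  (exists N, forall x, N <= x -> G x).

Definition enumerates (G : nat -> Prop) (g : nat -> nat) : Prop :=
  (forall j, g j < g j.+1) /\ (forall x, G x <-> exists j, g j = x).

Definition perm_numerical_semigroup (n : nat) (G : nat -> Prop) : Prop :=
  numerical_semigroup G /\
  exists g : nat -> nat,
    enumerates G g /\
    (forall x, G x <-> gen (fun y => exists2 j, 1 <= j <= n & y = g j) x) /\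
    (forall m r, r < n ->
       exists j, [/\ 1 <= j <= n, g (m * n + j) %% n = r &
                   forall j', 1 <= j' <= n -> g (m * n + j') %% n = r -> j' = j]).

Definition la (k : nat) : nat := 6 * k + 5.
Definition lb (k : nat) : nat := 2 * la k - 6.
Definition lc (k : nat) : nat := 2 * la k - 4.
Definition Sk (k : nat) (x : nat) : Prop := x = la k \/ x = lb k \/ x = lc k.
Definition Gk (k : nat) : nat -> Prop := gen (Sk k).

(* [u,v]_2 = {x | u <= x <= v, x = u mod 2}; v given via x + d <= w to avoid
   truncated subtraction where w - d could be negative *)
Definition Iik (k i : nat) (x : nat) : Prop :=
  (i * la k - 6 * (i %/ 2) <= x /\ x + 4 <= i * la k /\
   x %% 2 = (i * la k - 6 * (i %/ 2)) %% 2)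
  \/ x = i * la k.

Definition H14 (k : nat) (x : nat) : Prop :=
  (exists2 i, i <= 4 * k + 2 & Iik k i x) \/ (4 * k + 1) * la k + 3 <= x.

Definition set_lt (X Y : nat -> Prop) : Prop :=
  forall x y, X x -> Y y -> x < y.

(* Main.v *)
Require Import Defs.
From mathcomp Require Import all_boot zify.

Lemma laE k : la k = 6*k+5. Proof. by []. Qed.

Definition Cc k := (4*k+1) * la k + 3.

Definition W k j u := u = 0 \/ (4 <= u /\ u <= 6*(j%/2) /\ u %% 2 = 0) \/
  (la k + u <= 6*(j.+1 %/ 2) /\ u %% 2 = 1).

Lemma mulA_le k i j : i <= j -> i * la k <= j * la k.
Proof. move=> h; exact: leq_mul. Qed.

Lemma Wlem k j u x : 0 < k -> 1 <= j <= 4*k+2 -> u < la k -> x + u = j * la k ->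
  (j <= 4*k+1 \/ x < Cc k) -> (H14 k x <-> W k j u).
Proof.
move=> hk hj hu hx hC; have ha := laE k.
have hC' : x < Cc k.
  case: hC => // hj'; have := @mulA_le k _ _ hj'; rewrite /Cc; lia.
rewrite /Cc in hC'.
have hjA : 11 * j <= j * la k by rewrite mulnC; apply: leq_mul; lia.
have hjA2 : la k <= j * la k by have := @mulA_le k 1 j; rewrite mul1n; lia.
split.
- case=> [[i hi hI]|hc]; last lia.
  have hI' : i * la k - 6*(i%/2) <= x /\ x <= i * la k.
    case: hI => [[h1 [h2 h3]]|->]; lia.
  have : i = j \/ i = j.+1.
    case: (ltngtP i j) => hij; last by left.
    + have h1 : i <= j.-1 by lia.
      have := @mulA_le k _ _ h1; rewrite -subn1 mulnBl mul1n; lia.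
    + case: (ltngtP i j.+1) => hij2; [lia| |by right].
      have h1 : j.+2 <= i by lia.
      have := @mulA_le k _ _ h1; lia.
  case=> eij; subst i.
  + rewrite /W; case: hI => [[h1 [h2 h3]]|h]; lia.
  + rewrite /W; case: hI => [[h1 [h2 h3]]|h]; lia.
- rewrite /W => -[h|[h|h]].
  + left; exists j; first lia. right; lia.
  + left; exists j; first lia. left; lia.
  + left; exists j.+1.
    * case: (ltnP j (4*k+2)) => hj2; first lia.
      have ej : j = 4*k+2 by lia.
      subst j; lia.
    * left; lia.
Qed.

Lemma gen_add S x y : gen S x -> gen S y -> gen S (x+y).
Proof.
move=> gx gy; elim: gx => [|x0 y0 Sx _ IH]; first by rewrite add0n.
rewrite -addnA; exact: genS.
Qed.

Lemma gen_mul S g n : S g -> gen S (n*g).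
Proof.
move=> Sg; elim: n => [|n IH]; first by rewrite mul0n; exact: gen0.
rewrite mulSn; exact: genS.
Qed.

Lemma mulA_ge k n : 0 < k -> 11 * n <= n * la k.
Proof. move=> hk; rewrite mulnC; apply: leq_mul => //; rewrite laE; lia. Qed.

Lemma part1 k x : 0 < k -> Gk k x <->
  exists q r s, r <= q /\ x = (s + 2 * q) * la k - 6 * q + 2 * r.
Proof.
move=> hk; have ha := laE k; split.
- elim=> [|x0 y Sx _ [q [r [s [hr ->]]]]].
  + by exists 0, 0, 0.
  + have hq := @mulA_ge k q hk; have hs := @mulA_ge k s hk.
    case: Sx => [->|[->|->]].
    * exists q, r, s.+1; split => //; lia.
    * exists q.+1, r, s; split; [lia|rewrite /lb; lia].
    * exists q.+1, r.+1, s; split; [lia|rewrite /lc; lia].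
- move=> [q [r [s [hr ->]]]].
  have [d ->] : exists d, q = r + d by exists (q - r); lia.
  have -> : (s + 2 * (r + d)) * la k - 6 * (r + d) + 2 * r =
     s * la k + (d * lb k + r * lc k).
    rewrite /lb /lc !mulnBr.
    have := @mulA_ge k d hk; have := @mulA_ge k r hk; have := @mulA_ge k s hk; lia.
  apply: gen_add; first by apply: gen_mul; left.
  apply: gen_add; apply: gen_mul; right; [left|right] => //.
Qed.

Definition L k x := exists n t, x + 2*t = n * la k /\ (t = 0 \/ 2 <= t <= 3*(n%/2)).

Lemma G_L k x : 0 < k -> Gk k x <-> L k x.
Proof.
move=> hk; have ha := laE k; rewrite part1 //; split.
- move=> [q [r [s [hr ->]]]].
  have := @mulA_ge k (s + 2*q) hk => h.
  exists (s + 2*q), (3*q - r); split; first lia.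
  case: q hr h => [|q] hr h; [left; lia|right; lia].
- move=> [n [t [hx ht]]]; have hn := @mulA_ge k n hk.
  case: ht => [ht0|ht].
  + exists 0, 0, n; split => //; lia.
  + exists ((t+2) %/ 3), (3 * ((t+2)%/3) - t), (n - 2 * ((t+2)%/3)).
    rewrite subnK; last lia.
    split; lia.
Qed.

Lemma H_L k x : 0 < k -> H14 k x <-> L k x.
Proof.
move=> hk; have ha := laE k; split.
- case=> [[i hi hI]|hc].
  + have hi2 := @mulA_ge k i hk.
    case: hI => [[h1 [h2 h3]]|->].
    * exists i, ((i * la k - x) %/ 2); split; [lia|right; lia].
    * exists i, 0; split; [lia|left; lia].
  + rewrite /Cc in hc.
    have hA : 0 < la k by lia.
    move: (divn_eq x (la k)) (ltn_pmod x hA).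
    set q := x %/ la k; set r := x %% la k; clearbody q r => ex hr.
    have hq1 : 4*k+1 <= q.
      case: (leqP (4*k+1) q) => // hq.
      have h1 : q <= 4*k by lia.
      have := @mulA_le k _ _ h1; lia.
    have hq2 : q = 4*k+1 -> 3 <= r by move=> eq; subst q; lia.
    case: (posnP r) => hr0.
    * exists q, 0; split; [lia|left; lia].
    case: (boolP (odd r)) => hodd.
    * case: (eqVneq r (la k - 2)) => hr2.
      -- exists q.+3, (la k).+1; split; [lia|right; lia].
      -- exists q.+1, ((la k - r) %/ 2); split; [lia|right].
         have : r %% 2 = 1 by rewrite modn2 hodd.
         lia.
    * exists q.+2, (la k - r %/ 2); split.
      -- have : r %% 2 = 0 by rewrite modn2 (negbTE hodd).
         lia.
      -- right; have : r %% 2 = 0 by rewrite modn2 (negbTE hodd).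
         lia.
- move=> [n [t [hx ht]]].
  case: (leqP (Cc k) x) => hc; first by right.
  left; rewrite /Cc in hc.
  have hn := @mulA_ge k n hk.
  exists n.
  + case: (leqP n (4*k+2)) => // hn2.
    case: (eqVneq n (4*k+3)) => hn3.
    * subst n; lia.
    * have [d ed] : exists d, n = 4*k+4 + d by exists (n - (4*k+4)); lia.
      subst n; have := @mulA_ge k d hk; lia.
  + case: ht => [ht|ht]; [right; lia|left; lia].
Qed.

Lemma part3 k x : 0 < k -> Gk k x <-> H14 k x.
Proof. by move=> hk; rewrite G_L // H_L. Qed.

Lemma Iik_bounds k i x : 0 < k -> Iik k i x ->
  i * la k - 6 * (i %/ 2) <= x /\ x <= i * la k.
Proof. move=> hk hI; have := @mulA_ge k i hk; case: hI => [[h1 [h2 h3]]|->]; lia. Qed.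

Lemma part2a k i : 0 < k -> i <= 4 * k -> set_lt (Iik k i) (Iik k i.+2).
Proof.
move=> hk hi x y hx hy; have ha := laE k.
have := Iik_bounds _ _ _ hk hx; have := Iik_bounds _ _ _ hk hy; lia.
Qed.

Lemma part2b k i : 0 < k -> i <= 2 * k -> set_lt (Iik k i) (Iik k i.+1).
Proof.
move=> hk hi x y hx hy; have ha := laE k.
have := Iik_bounds _ _ _ hk hx; have := Iik_bounds _ _ _ hk hy; lia.
Qed.

Lemma part2c k i : 0 < k -> 2 * k + 1 <= i <= 4 * k + 1 ->
     forall x,
       (Iik k i.+1 x /\ (i - 1) * la k + 1 <= x <= i * la k) <->
       (i * la k - 6 * ((i - 1 - 2 * k) %/ 2) - 1 <= x <= i * la k - 1 /\
        x %% 2 = (i * la k - 6 * ((i - 1 - 2 * k) %/ 2) - 1) %% 2).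
Proof.
move=> hk hi x; have ha := laE k.
have hiA := @mulA_ge k i hk.
have hiA2 : la k <= i * la k by have := @mulA_le k 1 i; rewrite mul1n; lia.
rewrite mulnBl mul1n /Iik; split.
- case=> [[[h1 [h2 h3]]|h1] h4]; lia.
- move=> h; split; [left|]; lia.
Qed.

Definition Iikb k i x : bool :=
  ((i * la k - 6 * (i %/ 2) <= x) && (x + 4 <= i * la k) &&
   (x %% 2 == (i * la k - 6 * (i %/ 2)) %% 2)) || (x == i * la k).
Definition Hb k x : bool := has (fun i => Iikb k i x) (iota 0 (4*k+3)) || (Cc k <= x).

Lemma HbP k x : H14 k x <-> Hb k x.
Proof.
rewrite /H14 /Hb /Iikb /Iik; split.
- case=> [[i hi hI]|hc]; apply/orP; last by right.
  left; apply/hasP; exists i; first by rewrite mem_iota; lia.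
  case: hI => [[h1 [h2 h3]]|h]; apply/orP; [left|right].
  + by rewrite h1 h2 h3 eqxx.
  + by apply/eqP.
- case/orP => [/hasP [i hi hI]|hc]; last by right.
  left; exists i; first by move: hi; rewrite mem_iota; lia.
  case/orP: hI => [/andP [/andP [h1 h2] /eqP h3]|/eqP h]; [left|right] => //.
Qed.

Lemma next_ex k y : exists z, (y < z) && Hb k z.
Proof. exists (y.+1 + Cc k); apply/andP; split; [lia|rewrite /Hb; apply/orP; right; lia]. Qed.

Definition nextH k y := ex_minn (next_ex k y).

Lemma nextH_spec k y : [/\ y < nextH k y, H14 k (nextH k y) &
   forall z, y < z -> H14 k z -> nextH k y <= z].
Proof.
rewrite /nextH; case: ex_minnP => m /andP [h1 h2] hmin; split => //.
- by apply/HbP.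
- move=> z hz /HbP hHz; apply: hmin; by rewrite hz hHz.
Qed.

Lemma next_eq k y z : H14 k z -> y < z -> (forall x, y < x < z -> ~ H14 k x) ->
  nextH k y = z.
Proof.
move=> hz hyz hgap; case: (nextH_spec k y) => h1 h2 h3.
have := h3 z hyz hz => hle.
case: (ltngtP (nextH k y) z) => // hlt; last lia.
exfalso; apply: (hgap (nextH k y)) => //; lia.
Qed.

Lemma Hwin k j u x : 0 < k -> 1 <= j <= 4*k+2 -> u < la k -> x + u = j * la k ->
  (j <= 4*k+1 \/ x < Cc k) -> W k j u -> H14 k x.
Proof. move=> hk hj hu hx hC hW; exact: (proj2 (Wlem _ _ _ _ hk hj hu hx hC)). Qed.

Lemma next_win k j u u' y z : 0 < k -> 1 <= j <= 4*k+2 -> u' < u <= la k ->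
  (j <= 4*k+1 \/ z <= Cc k) -> y + u = j * la k -> z + u' = j * la k ->
  H14 k z -> (forall v, u' < v < u -> ~ W k j v) -> nextH k y = z.
Proof.
move=> hk hj hu hC hy hz hHz hgap.
apply: next_eq => //; first lia.
move=> x hx hHx.
have hv : x + (j * la k - x) = j * la k by lia.
apply: (hgap (j * la k - x)); first lia.
apply: (proj1 (Wlem _ _ _ _ hk hj _ hv _)) => //; first lia.
case: hC => hC; [by left|right; lia].
Qed.

Definition fam k j u := (u = 0 /\ j <= 2*k) \/ (u = 1 /\ 2*k+1 <= j) \/
  (exists t, u = 6*t+2 /\ 1 <= t <= k /\ 2*t+2 <= j) \/
  (exists t, u = 6*t+5 /\ 2*k+3+2*t <= j).

Definition Bs k x := (Cc k <= x /\ (x - Cc k) %% 3 = 0) \/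
  exists j u, [/\ x + u = j * la k, u < la k, 1 <= j <= 4*k+1 & fam k j u].

Definition d3 a b c := a %% 3 <> b %% 3 /\ a %% 3 <> c %% 3 /\ b %% 3 <> c %% 3.

Definition P k y := d3 y (nextH k y) (nextH k (nextH k y)) /\
  Bs k (nextH k (nextH k (nextH k y))).

Ltac ll := (try unfold Cc); (try unfold W); lia.
Ltac nw j u u' :=
  apply: (@next_win _ j u u'); [done|ll|ll|ll|ll|ll|
    apply: (@Hwin _ j u'); [done|ll|ll|ll|ll|ll] |
    let v := fresh "v" in let hv := fresh "hv" in move=> v hv; ll].

Lemma stepU0 k j y : 0 < k -> 1 <= j <= 2*k -> y = j * la k -> P k y.
Proof.
move=> hk hj ->; rewrite /P; have ha := laE k.
have hjA := @mulA_ge k j hk.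
have e1 : nextH k (j * la k) = j.+1 * la k - 6 * (j.+1 %/ 2).
  nw j.+1 (la k) (6 * (j.+1 %/ 2)).
rewrite e1.
have e2 : nextH k (j.+1 * la k - 6 * (j.+1 %/ 2)) = j.+1 * la k - (6 * (j.+1 %/ 2) - 2).
  nw j.+1 (6 * (j.+1 %/ 2)) (6 * (j.+1 %/ 2) - 2).
rewrite e2.
case: (leqP 2 (j.+1 %/ 2)) => hh.
- have e3 : nextH k (j.+1 * la k - (6 * (j.+1 %/ 2) - 2)) = j.+1 * la k - (6 * (j.+1 %/ 2) - 4).
    nw j.+1 (6 * (j.+1 %/ 2) - 2) (6 * (j.+1 %/ 2) - 4).
  rewrite e3; split; first by rewrite /d3; lia.
  right; exists j.+1, (6 * (j.+1 %/ 2) - 4); split; try lia.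
  right; right; left; exists (j.+1 %/ 2 - 1); lia.
- case: (leqP (la k + 1) (6 * (j.+2 %/ 2))) => hc.
  + have e3 : nextH k (j.+1 * la k - (6 * (j.+1 %/ 2) - 2)) = j.+1 * la k - 1.
      nw j.+1 (6 * (j.+1 %/ 2) - 2) 1.
    rewrite e3; split; first by rewrite /d3; lia.
    right; exists j.+1, 1; split; try lia.
    right; left; lia.
  + have e3 : nextH k (j.+1 * la k - (6 * (j.+1 %/ 2) - 2)) = j.+1 * la k - 0.
      nw j.+1 (6 * (j.+1 %/ 2) - 2) 0.
    rewrite e3; split; first by rewrite /d3; lia.
    right; exists j.+1, 0; split; try lia.
    left; lia.
Qed.

Lemma stepE k j t y : 0 < k -> 1 <= t <= k -> 2*t+2 <= j <= 4*k+1 ->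
  y + (6*t+2) = j * la k -> P k y.
Proof.
move=> hk ht hj hy; rewrite /P; have ha := laE k.
have hjA := @mulA_ge k j hk.
case: (leqP (la k + (6*t+1)) (6 * (j.+1 %/ 2))) => hc.
- have e1 : nextH k y = j * la k - (6*t+1) by nw j (6*t+2) (6*t+1).
  rewrite e1.
  have e2 : nextH k (j * la k - (6*t+1)) = j * la k - (6*t) by nw j (6*t+1) (6*t).
  rewrite e2.
  have e3 : nextH k (j * la k - (6*t)) = j * la k - (6*t-1) by nw j (6*t) (6*t-1).
  rewrite e3; split; first by rewrite /d3; lia.
  right; exists j, (6*t-1); split; try lia.
  right; right; right; exists (t-1); lia.
- have e1 : nextH k y = j * la k - (6*t) by nw j (6*t+2) (6*t).
  rewrite e1.
  have e2 : nextH k (j * la k - (6*t)) = j * la k - (6*t-2) by nw j (6*t) (6*t-2).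
  rewrite e2.
  case: (leqP 2 t) => ht2.
  + have e3 : nextH k (j * la k - (6*t-2)) = j * la k - (6*t-4) by nw j (6*t-2) (6*t-4).
    rewrite e3; split; first by rewrite /d3; lia.
    right; exists j, (6*t-4); split; try lia.
    right; right; left; exists (t-1); lia.
  + case: (leqP (la k + 1) (6 * (j.+1 %/ 2))) => hc2.
    * have e3 : nextH k (j * la k - (6*t-2)) = j * la k - 1 by nw j (6*t-2) 1.
      rewrite e3; split; first by rewrite /d3; lia.
      right; exists j, 1; split; try lia.
      right; left; lia.
    * have e3 : nextH k (j * la k - (6*t-2)) = j * la k - 0 by nw j (6*t-2) 0.
      rewrite e3; split; first by rewrite /d3; lia.
      right; exists j, 0; split; try lia.
      left; lia.
Qed.

Lemma stepO k j t y : 0 < k -> 2*k+3+2*t <= j <= 4*k+1 -> 6*t+5 < la k ->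
  y + (6*t+5) = j * la k -> P k y.
Proof.
move=> hk hj ht hy; rewrite /P; have ha := laE k.
have hjA := @mulA_ge k j hk.
have e1 : nextH k y = j * la k - (6*t+4) by nw j (6*t+5) (6*t+4).
rewrite e1.
have e2 : nextH k (j * la k - (6*t+4)) = j * la k - (6*t+3) by nw j (6*t+4) (6*t+3).
rewrite e2.
case: (leqP 1 t) => ht1.
- have e3 : nextH k (j * la k - (6*t+3)) = j * la k - (6*t+2) by nw j (6*t+3) (6*t+2).
  rewrite e3; split; first by rewrite /d3; lia.
  right; exists j, (6*t+2); split; try lia.
  right; right; left; exists t; lia.
- have e3 : nextH k (j * la k - (6*t+3)) = j * la k - 1 by nw j (6*t+3) 1.
  rewrite e3; split; first by rewrite /d3; lia.
  right; exists j, 1; split; try lia.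
  right; left; lia.
Qed.

Lemma stepU1 k j y : 0 < k -> 2*k+1 <= j <= 4*k+1 -> y + 1 = j * la k -> P k y.
Proof.
move=> hk hj hy; rewrite /P; have ha := laE k.
have hjA := @mulA_ge k j hk.
have hjle : j * la k <= (4*k+1) * la k by apply: mulA_le; lia.
have e1 : nextH k y = j * la k - 0 by nw j 1 0.
rewrite e1.
have e2 : nextH k (j * la k - 0) = j.+1 * la k - (la k - 1).
  rewrite /Cc in hjle *; nw j.+1 (la k) (la k - 1).
rewrite e2.
case: (leqP j (4*k)) => hj2.
- have hjle2 : j * la k <= (4*k) * la k by apply: mulA_le; lia.
  have e3 : nextH k (j.+1 * la k - (la k - 1)) = j.+1 * la k - (la k - 3).
    rewrite /Cc in hjle *; nw j.+1 (la k - 1) (la k - 3).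
  rewrite e3; split; first by rewrite /d3; lia.
  right; exists j.+1, (la k - 3); split; try lia.
  right; right; left; exists k; lia.
- have ej : j = 4*k+1 by lia.
  subst j.
  have e3 : nextH k ((4*k+1).+1 * la k - (la k - 1)) = Cc k.
    apply: (@next_win _ (4*k+1).+1 (la k - 1) (la k - 3)); rewrite /Cc; try lia.
    + right; lia.
    + move=> v hv; rewrite /W; lia.
  rewrite e3; split; first by rewrite /d3 /Cc; lia.
  left; lia.
Qed.

Lemma stepT k y : 0 < k -> Cc k <= y -> (y - Cc k) %% 3 = 0 -> P k y.
Proof.
move=> hk hy hm; rewrite /P.
have nx : forall z, Cc k <= z -> nextH k z = z.+1.
  move=> z hz; apply: next_eq; [right; rewrite /Cc in hz; lia|lia|move=> x hx; lia].
rewrite nx // nx; last lia. rewrite nx; last lia.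
split; first by rewrite /d3; lia.
left; lia.
Qed.

Lemma stepB k y : 0 < k -> Bs k y -> P k y.
Proof.
move=> hk [[h1 h2]|[j [u [hy hu hj hf]]]]; first exact: stepT.
case: hf => [[e h]|[[e h]|[[t [e h]]|[t [e h]]]]]; subst u.
- apply: (@stepU0 k j) => //; lia.
- apply: (@stepU1 k j) => //; lia.
- apply: (@stepE k j t) => //; lia.
- apply: (@stepO k j t) => //; lia.
Qed.

Definition gg k n := iter n (nextH k) 0.

Lemma gg_inc k n : gg k n < gg k n.+1.
Proof. by case: (nextH_spec k (gg k n)). Qed.

Lemma gg_ge k n : n <= gg k n.
Proof. elim: n => // n IH; have := gg_inc k n; lia. Qed.

Lemma H0 k : H14 k 0.
Proof. left; exists 0; [lia|right; by rewrite mul0n]. Qed.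

Lemma gg_H k n : H14 k (gg k n).
Proof. case: n => [|n]; first exact: H0. by case: (nextH_spec k (gg k n)). Qed.

Lemma gg_all k x : H14 k x -> exists j, gg k j = x.
Proof.
move=> hx.
have step : forall n, gg k n <= x -> (exists j, gg k j = x) \/ gg k n.+1 <= x.
  move=> n hn; case: (ltngtP (gg k n) x) => h; [right|lia|left; by exists n].
  by case: (nextH_spec k (gg k n)) => _ _ /(_ x h hx).
have all : forall n, (exists j, gg k j = x) \/ gg k n <= x.
  elim=> [|n [IH|IH]]; [right; rewrite /gg /=; lia|by left|exact: step].
case: (all x.+1) => // h; have := gg_ge k x.+1; lia.
Qed.

Lemma gen_ext (S S' : nat -> Prop) x : (forall y, S y -> S' y) -> gen S x -> gen S' x.
Proof.
move=> hS; elim=> [|x0 y0 Sx _ IH]; first exact: gen0.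
apply: genS => //; exact: hS.
Qed.

Lemma gg123 k : 0 < k -> [/\ gg k 1 = la k, gg k 2 = lb k & gg k 3 = lc k].
Proof.
move=> hk; have ha := laE k.
have e1 : nextH k 0 = la k by nw 1 (la k) 0.
have e2 : nextH k (la k) = lb k by rewrite /lb; nw 2 (la k) 6.
have e3 : nextH k (lb k) = lc k by rewrite /lb /lc; nw 2 6 4.
by rewrite /gg /= e1 e2 e3.
Qed.

Lemma gg_B k m : 0 < k -> Bs k (gg k (m * 3 + 1)).
Proof.
move=> hk; elim: m => [|m IH].
- case: (gg123 k hk) => -> _ _; right; exists 1, 0; split; rewrite /fam ?laE; lia.
- have -> : m.+1 * 3 + 1 = (m * 3 + 1).+3 by lia.
  by case: (stepB k _ hk IH).
Qed.

Lemma gg_perm k : 0 < k -> forall m r, r < 3 ->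
    exists j, [/\ 1 <= j <= 3, gg k (m * 3 + j) %% 3 = r &
                forall j', 1 <= j' <= 3 -> gg k (m * 3 + j') %% 3 = r -> j' = j].
Proof.
move=> hk m r hr.
have [hd _] := stepB k _ hk (gg_B k m hk).
have e2 : gg k (m * 3 + 2) = nextH k (gg k (m * 3 + 1)) by rewrite addnS.
have e3 : gg k (m * 3 + 3) = nextH k (nextH k (gg k (m * 3 + 1))) by rewrite !addnS.
move: hd; rewrite -e3 -e2 /d3 => hd.
have cases : forall j', 1 <= j' <= 3 -> j' = 1 \/ j' = 2 \/ j' = 3 by move=> j' hj; lia.
have [h1|[h2|h3]] : gg k (m*3+1) %% 3 = r \/ gg k (m*3+2) %% 3 = r \/ gg k (m*3+3) %% 3 = r by lia.
- exists 1; split => // j' /cases [->|[->|->]] //; lia.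
- exists 2; split => // j' /cases [->|[->|->]] //; lia.
- exists 3; split => // j' /cases [->|[->|->]] //; lia.
Qed.

Theorem lemma4p14 (k : nat) (hk : 0 < k) :
  (* (1) *)
  (forall x, Gk k x <->
     exists q r s, r <= q /\ x = (s + 2 * q) * la k - 6 * q + 2 * r) /\
  (* (2) *)
  (forall i, i <= 4 * k -> set_lt (Iik k i) (Iik k i.+2)) /\
  (forall i, i <= 2 * k -> set_lt (Iik k i) (Iik k i.+1)) /\
  (forall i, 2 * k + 1 <= i <= 4 * k + 1 ->
     forall x,
       (Iik k i.+1 x /\ (i - 1) * la k + 1 <= x <= i * la k) <->
       (i * la k - 6 * ((i - 1 - 2 * k) %/ 2) - 1 <= x <= i * la k - 1 /\
        x %% 2 = (i * la k - 6 * ((i - 1 - 2 * k) %/ 2) - 1) %% 2)) /\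
  (* (3) *)
  (forall x, Gk k x <-> H14 k x) /\
  (* (4) *)
  perm_numerical_semigroup 3 (H14 k).
Proof.
split; first by move=> x; exact: part1.
split; first by move=> i; exact: part2a.
split; first by move=> i; exact: part2b.
split; first by move=> i; exact: part2c.
split; first by move=> x; exact: part3.
split.
- split; first exact: H0.
  split.
  + move=> x y /(part3 _ _ hk) hx /(part3 _ _ hk) hy; apply/(part3 _ _ hk).
    exact: gen_add.
  + exists (Cc k) => x hx; by right.
- exists (gg k); split.
  + split; first exact: gg_inc.
    move=> x; split; first exact: gg_all.
    by move=> [j <-]; exact: gg_H.
  + split; last exact: gg_perm.
    case: (gg123 k hk) => e1 e2 e3.
    move=> x; rewrite -(part3 _ _ hk); split.
    * apply: gen_ext => y [->|[->|->]].
      -- by exists 1; rewrite ?e1.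
      -- by exists 2; rewrite ?e2.
      -- by exists 3; rewrite ?e3.
    * apply: gen_ext => y [j hj ->].
      have : j = 1 \/ j = 2 \/ j = 3 by lia.
      case=> [->|[->|->]]; rewrite ?e1 ?e2 ?e3 /Sk; tauto.
Qed.
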